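(* Assume $\mathcal F\cap\operatorname{relint}\mathcal X\neq\emptyset$ and realizability: $\mu^E\in\mathsf{RL}_{\mathcal F}(r^E)$ for some $r^E\in\mathbb R^{nm}$. Then $$\mathsf{IRL}_{\mathcal F}(\mu^E)=\partial f(\mu^E)+\mathcal U+\mathcal C(\mu^E)+\mathcal E(\mu^E).$$
   Context: Standing setup: $\mathcal S=\{s_1,\dots,s_n\}$, $\mathcal A=\{a_1,\dots,a_m\}$ finite, $m>1$; vectors in $\mathbb R^{nm}$ are functions on $\mathcal S\times\mathcal A$. $P$ transition law, $\nu_0\in\Delta_{\mathcal S}$, $\gamma\in(0,1)$, $\Psi=[\Psi_1,\dots,\Psi_k]$, $b\in\mathbb R^k$, $E=[I_n,\dots,I_n]^\top$. $\mathcal M=\{\mu\ge0:(E-\gamma P)^\top\mu=(1-\gamma)\nu_0\}$, $\mathcal F=\{\mu\in\mathcal M:\Psi^\top\mu\le b\}$. $\mathcal X$ closed convex, $\Delta_{\mathcal S\times\mathcal A}\subseteq\mathcal X$, $f:\mathcal X\to\mathbb R$ continuous convex, $\partial f(\mu)=\{g: f(\tilde\mu)\ge f(\mu)+g^\top(\tilde\mu-\mu)\ \forall\tilde\mu\in\mathcal X\}$. $\mathsf{RL}_{\mathcal F}(r)=\arg\max_{\mu\in\mathcal F}r^\top\mu-f(\mu)$; $\mathsf{IRL}_{\mathcal F}(\hat\mu)=\arg\min_{r\in\mathbb R^{nm}}\max_{\mu\in\mathcal F}r^\top(\mu-\hat\mu)-f(\mu)$. $\mathcal U=\operatorname{span}(E-\gamma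 P)$; $\mathcal C(\mu)=\operatorname{cone}\{\Psi_i:\Psi_i^\top\mu=b_i\}$; $\mathcal E(\mu)=\operatorname{cone}\{-e_{s,a}:\mu(s,a)=0\}$ with $e_{s,a}$ standard unit vectors; cone of empty family is $\{0\}$. *)

(* Defs.v *)
From HB Require Import structures.
From mathcomp Require Import all_boot all_order all_algebra.
From mathcomp Require Import boolp classical_sets reals.
Set Implicit Arguments. Unset Strict Implicit. Unset Printing Implicit Defensive.
Import Order.TTheory GRing.Theory Num.Theory.
Local Open Scope ring_scope.
Local Open Scope classical_set_scope.

(* States S = 'I_n, actions A = 'I_m; vectors of R^{nm} are functions on S x A. *)
Definition vec (R : Type) (n m : nat) := 'I_n * 'I_m -> R.

Section MDP.
Variables (R : realType) (n m k : nat).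
Local Notation vec := (vec R n m).

Definition dot (r mu : vec) : R := \sum_(p : 'I_n * 'I_m) r p * mu p.
Definition vsub (x y : vec) : vec := fun p => x p - y p.

Definition simplexS (nu : 'I_n -> R) : Prop :=
  (forall s, 0 <= nu s) /\ \sum_(s : 'I_n) nu s = 1.
Definition simplexSA : set vec :=
  [set mu | (forall p, 0 <= mu p) /\ \sum_(p : 'I_n * 'I_m) mu p = 1].

(* transition law: P p s' = P(s' | s, a) for p = (s, a) *)
Definition transition_law (P : 'I_n * 'I_m -> 'I_n -> R) : Prop :=
  forall p, simplexS (P p).

(* entries of the nm x n matrix E - gamma P, E = [I_n, ..., I_n]^T *)
Definition EmgP (P : 'I_n * 'I_m -> 'I_n -> R) (gamma : R)
  (p : 'I_n * 'I_m) (s' : 'I_n) : R := (p.1 == s')%:R - gamma * P p s'.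

Definition occM P gamma (nu0 : 'I_n -> R) : set vec :=
  [set mu | (forall p, 0 <= mu p) /\
     forall s', \sum_(p : 'I_n * 'I_m) EmgP P gamma p s' * mu p = (1 - gamma) * nu0 s'].

Definition feasF P gamma nu0 (Psi : 'I_k -> vec) (b : 'I_k -> R) : set vec :=
  [set mu | occM P gamma nu0 mu /\ forall i, dot (Psi i) mu <= b i].

(* geometry on R^{nm} (sup-norm balls; all norms are equivalent) *)
Definition near_le (x y : vec) (e : R) : Prop := forall p, `|x p - y p| < e.

Definition closed_set (X : set vec) : Prop :=
  forall x, (forall e, 0 < e -> exists2 y, X y & near_le y x e) -> X x.
Definition convex_set (X : set vec) : Prop :=
  forall x y t, X x -> X y -> 0 <= t -> t <= 1 ->
    X (fun p => t * x p + (1 - t) * y p).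
Definition convex_on (X : set vec) (f : vec -> R) : Prop :=
  forall x y t, X x -> X y -> 0 <= t -> t <= 1 ->
    f (fun p => t * x p + (1 - t) * y p) <= t * f x + (1 - t) * f y.
Definition continuous_on (X : set vec) (f : vec -> R) : Prop :=
  forall x e, X x -> 0 < e -> exists2 d, 0 < d &
    forall y, X y -> near_le y x d -> `|f y - f x| < e.

Definition aff_hull (X : set vec) : set vec :=
  [set x | exists (N : nat) (xs : 'I_N -> vec) (w : 'I_N -> R),
     (forall j, X (xs j)) /\ \sum_(j < N) w j = 1 /\
     x = (fun p => \sum_(j < N) w j * xs j p)].
Definition relint (X : set vec) : set vec :=
  [set x | X x /\ exists2 e, 0 < e &
     forall y, aff_hull X y -> near_le y x e -> X y].

Definition subdiff (X : set vec) (f : vec -> R) (mu : vec) : set vec :=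
  [set g | forall mt, X mt -> f mt >= f mu + dot g (vsub mt mu)].

Definition RL (F : set vec) (f : vec -> R) (r : vec) : set vec :=
  [set mu | F mu /\ forall mu', F mu' -> dot r mu' - f mu' <= dot r mu - f mu].

Definition irl_obj (F : set vec) (f : vec -> R) (muhat r : vec) : R :=
  sup [set dot r (vsub mu muhat) - f mu | mu in F].
Definition IRL (F : set vec) (f : vec -> R) (muhat : vec) : set vec :=
  [set r | forall r', irl_obj F f muhat r <= irl_obj F f muhat r'].

Definition Uspan P gamma : set vec :=
  [set r | exists v : 'I_n -> R,
     r = (fun p => \sum_(s' < n) EmgP P gamma p s' * v s')].

(* cone generated by the family {v i : Q i}; the empty family gives {0} *)
Definition cone_of (I : finType) (Q : I -> Prop) (v : I -> vec) : set vec :=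
  [set x | exists lam : I -> R, (forall i, 0 <= lam i) /\
     (forall i, ~ Q i -> lam i = 0) /\
     x = (fun p => \sum_(i : I) lam i * v i p)].

Definition unit_vec (q : 'I_n * 'I_m) : vec := fun p => (p == q)%:R.

Definition Ccone (Psi : 'I_k -> vec) (b : 'I_k -> R) (mu : vec) : set vec :=
  cone_of (fun i => dot (Psi i) mu = b i) Psi.
Definition Econe (mu : vec) : set vec :=
  cone_of (fun q => mu q = 0) (fun q p => - unit_vec q p).

Definition msum4 (A B C D : set vec) : set vec :=
  [set x | exists a b c d, A a /\ B b /\ C c /\ D d /\
     x = (fun p => a p + b p + c p + d p)].
End MDP.

(* Main.v *)
Require Import Defs.
From HB Require Import structures.
From mathcomp Require Import all_boot all_order all_algebra.
From mathcomp Require Import boolp classical_sets reals.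
From mathcomp Require Import ring lra.
Import Order.TTheory GRing.Theory Num.Theory.
Local Open Scope ring_scope.
Local Open Scope classical_set_scope.
Set Implicit Arguments. Unset Strict Implicit. Unset Printing Implicit Defensive.

Section Gen.
Variables (R : realType) (n m : nat).
Local Notation vec := (vec R n m).
Local Notation dot := (@dot R n m).

Lemma dot_comb (a x y : vec) (u v : R) :
  dot a (fun p => u * x p + v * y p) = u * dot a x + v * dot a y.
Proof.
rewrite /Defs.dot !mulr_sumr -big_split /=; apply: eq_bigr => p _; ring.
Qed.

Lemma dot_combl (a b x : vec) (u v : R) :
  dot (fun p => u * a p + v * b p) x = u * dot a x + v * dot b x.
Proof.
rewrite /Defs.dot !mulr_sumr -big_split /=; apply: eq_bigr => p _; ring.
Qed.

Lemma dotC (a x : vec) : dot a x = dot x a.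
Proof. by apply: eq_bigr => p _; rewrite mulrC. Qed.

Lemma sq_sum0 (c : vec) : dot c c <= 0 -> forall p, c p = 0.
Proof.
move=> H p.
have H0 : dot c c = 0.
  apply/eqP; rewrite eq_le H /= /Defs.dot; apply: sumr_ge0 => q _.
  by rewrite -expr2 sqr_ge0.
have := @psumr_eq0P _ _ xpredT (fun q => c q * c q).
move=> /(_ (fun q _ => ltac:(rewrite -expr2; exact: sqr_ge0)) H0 p isT).
by move/eqP; rewrite mulf_eq0 orbb => /eqP.
Qed.

Lemma farkas (I : eqType) (s : seq I) : uniq s -> forall (g : I -> vec) (c : vec),
  (forall x : vec, (forall i, i \in s -> 0 <= dot (g i) x) -> 0 <= dot c x) ->
  exists lam : I -> R, (forall i, 0 <= lam i) /\
     forall p, c p = \sum_(i <- s) lam i * g i p.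
Proof.
elim: s => [|j s IH] /= Hu g c H.
  exists (fun _ => 0); split => // p; rewrite big_nil.
  apply: sq_sum0 => {p}.
  have := H (fun p => - 1 * c p + 0 * c p) (fun i => ltac:(by rewrite in_nil)).
  by rewrite dot_comb mul0r addr0 mulN1r oppr_ge0.
move/andP: Hu => [Hj Hu].
case: (pselect (forall x, (forall i, i \in s -> 0 <= dot (g i) x) -> 0 <= dot c x)) => Hs.
  have [lam [Hl Hc]] := IH Hu g c Hs.
  exists (fun i => if i == j then 0 else lam i); split.
    by move=> i; case: ifP.
  move=> p; rewrite big_cons eqxx mul0r add0r Hc; apply: eq_big_seq => i Hi.
  by case: eqP => // Eij; move: Hj; rewrite -Eij Hi.
have [x0 Hx0] : exists x0, ~ ((forall i, i \in s -> 0 <= dot (g i) x0) -> 0 <= dot c x0).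
  by apply/existsNP.
move/not_implyP: Hx0 => [Hx0 Hcx0].
have {}Hcx0 : dot c x0 < 0 by rewrite ltNge; apply/negP.
set gj0 := dot (g j) x0.
have Hgj0 : gj0 < 0.
  rewrite ltNge; apply/negP => Hge.
  suff : 0 <= dot c x0 by rewrite leNgt Hcx0.
  apply: H => i; rewrite in_cons => /orP [/eqP -> //| ]; exact: Hx0.
have Hgj0' : gj0 != 0 by rewrite lt_eqF.
pose g' i p := 1 * g i p + (- (dot (g i) x0 / gj0)) * g j p.
pose c' p := 1 * c p + (- (dot c x0 / gj0)) * g j p.
have Hs' : forall x, (forall i, i \in s -> 0 <= dot (g' i) x) -> 0 <= dot c' x.
  move=> x Hx.
  pose y p := 1 * x p + (- (dot (g j) x / gj0)) * x0 p.
  have Hy : 0 <= dot c y.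
    apply: H => i; rewrite in_cons => /orP [/eqP -> | Hi].
      by rewrite /y dot_comb -/gj0 mul1r mulNr divfK ?subrr.
    have -> : dot (g i) y = dot (g' i) x.
      rewrite /y /g' dot_combl !dot_comb -/gj0; field; exact: Hgj0'.
    exact: Hx.
  have <- : dot c y = dot c' x.
    rewrite /y /c' dot_combl !dot_comb -/gj0; field; exact: Hgj0'.
  exact: Hy.
have [mu [Hmu Hc']] := IH Hu g' c' Hs'.
pose th := (dot c x0 - \sum_(i <- s) mu i * dot (g i) x0) / gj0.
exists (fun i => if i == j then th else mu i); split.
  move=> i0; case: ifP => // _; rewrite /th.
  have Hnum : dot c x0 - \sum_(i <- s) mu i * dot (g i) x0 < 0.
    rewrite subr_lt0; apply: (lt_le_trans Hcx0).
    rewrite big_seq; apply: sumr_ge0 => i Hi; apply: mulr_ge0 => //; exact: Hx0.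
  by rewrite -mulrNN mulr_ge0 // ?oppr_ge0 ?invr_le0 ltW.
move=> p; rewrite big_cons eqxx.
rewrite (eq_big_seq (fun i => mu i * g i p)); last first.
  by move=> i Hi; case: eqP => // Eij; move: Hj; rewrite -Eij Hi.
have E : \sum_(i <- s) mu i * g' i p = \sum_(i <- s) mu i * g i p
    - (\sum_(i <- s) mu i * dot (g i) x0) / gj0 * g j p.
  rewrite !mulr_suml -sumrB; apply: eq_bigr => i _; rewrite /g'; field; exact: Hgj0'.
have Hcp := Hc' p; rewrite E {E} in Hcp.
have -> : c p = c' p + dot c x0 / gj0 * g j p by rewrite /c'; ring.
rewrite Hcp /th; field; exact: Hgj0'.
Qed.

Lemma dot_add (a x y : vec) : dot a (fun p => x p + y p) = dot a x + dot a y.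
Proof. rewrite /Defs.dot -big_split /=; apply: eq_bigr => p _; ring. Qed.

Lemma dot_scale (a x : vec) (u : R) : dot a (fun p => u * x p) = u * dot a x.
Proof. by rewrite /Defs.dot mulr_sumr; apply: eq_bigr => p _; ring. Qed.

Lemma dot0r (a : vec) : dot a (fun _ => 0) = 0.
Proof. by rewrite /Defs.dot big1 // => p _; rewrite mulr0. Qed.

Lemma fin_small (I : finType) (Q : I -> R -> Prop) :
  (forall i, exists2 s0, 0 < s0 & forall s, 0 < s -> s <= s0 -> Q i s) ->
  exists2 s, 0 < s & forall i, Q i s.
Proof.
move=> H.
suff : forall l : seq I, exists2 s0, 0 < s0 &
    forall s, 0 < s -> s <= s0 -> forall i, i \in l -> Q i s.
  move=> /(_ (enum I)) [s0 s00 Hs]; exists s0 => // i.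
  by apply: Hs => //; rewrite mem_enum.
elim => [|i l [s1 s10 H1]]; first by exists 1.
have [s2 s20 H2] := H i.
exists (Num.min s1 s2); first by rewrite lt_min s10 s20.
move=> s s0; rewrite le_min => /andP [h1 h2] j; rewrite in_cons => /orP [/eqP -> | jl].
  exact: H2.
exact: H1.
Qed.

Lemma small_lin (a c : R) : 0 < a ->
  exists2 s0, 0 < s0 & forall s, 0 < s -> s <= s0 -> s * c <= a.
Proof.
move=> a0; have c1 : 0 < `|c| + 1 by rewrite ltr_wpDl.
exists (a / (`|c| + 1)); first by rewrite divr_gt0.
move=> s s0 hs.
apply: (le_trans (ler_wpM2l (ltW s0) (ler_norm c))).
apply: (le_trans (ler_wpM2r (normr_ge0 c) hs)).
rewrite mulrAC ler_pdivrMr // ler_wpM2l ?(ltW a0) // lerDl //.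
Qed.

Lemma dotNl (a x : vec) : dot (fun p => - a p) x = - dot a x.
Proof. by rewrite /Defs.dot -sumrN; apply: eq_bigr => p _; rewrite mulNr. Qed.

Lemma dot_addl (a c x : vec) : dot (fun p => a p + c p) x = dot a x + dot c x.
Proof. rewrite /Defs.dot -big_split /=; apply: eq_bigr => p _; ring. Qed.

Lemma dot_addZ (a x y : vec) (s : R) :
  dot a (fun p => x p + s * y p) = dot a x + s * dot a y.
Proof. rewrite /Defs.dot mulr_sumr -big_split /=; apply: eq_bigr => p _; ring. Qed.

Lemma dot_subr (a x y : vec) : dot a (fun p => x p - y p) = dot a x - dot a y.
Proof. rewrite /Defs.dot -sumrB /=; apply: eq_bigr => p _; ring. Qed.

Lemma dot_unit (x : vec) q : dot (@unit_vec R n m q) x = x q.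
Proof.
rewrite /Defs.dot (bigD1 q) //= /unit_vec eqxx mul1r big1 ?addr0 // => p /negbTE ->.
by rewrite mul0r.
Qed.

Lemma dot_suml (I : finType) (G : I -> vec) (d : vec) :
  dot (fun p => \sum_i G i p) d = \sum_i dot (G i) d.
Proof.
rewrite /Defs.dot (eq_bigr (fun p => \sum_i G i p * d p)); last by move=> p _; rewrite mulr_suml.
by rewrite exchange_big.
Qed.

Lemma HB (V : vec -> set R)
 (Va : forall d1 d2 v1 v2, V d1 v1 -> V d2 v2 ->
    exists v3, V (fun p => d1 p + d2 p) v3 /\ v3 <= v1 + v2)
 (Vb : forall a d v, 0 < a -> V d v -> V (fun p => a * d p) (a * v))
 (Vc : forall v, V (fun _ => 0) v -> 0 <= v)
 (Vd : forall d, exists v, V d v) :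
 exists lam : vec, forall d v, V d v -> dot lam d <= v.
Proof.
suff : forall s : seq ('I_n * 'I_m), uniq s -> exists lam : vec, forall d v,
    (forall p, p \notin s -> d p = 0) -> V d v -> dot lam d <= v.
  move=> /(_ (enum (@predT ('I_n * 'I_m))) (enum_uniq _)) [lam Hlam].
  by exists lam => d v; apply: Hlam => p; rewrite mem_enum.
elim => [|q s IH] /=.
  move=> _; exists (fun _ => 0) => d v Hd Vdv.
  have Ed : d = (fun _ => 0) by apply/funext => p; exact: Hd.
  rewrite Ed dot0r; apply: Vc; by rewrite -Ed.
move=> /andP [Hq Hu]; have [lam Hlam] := IH Hu.
pose e p : R := (p == q)%:R.
pose A := [set a | exists y v, (forall p, p \notin s -> y p = 0) /\
   V (fun p => y p - e p) v /\ a = dot lam y - v].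
pose B := [set b | exists y v, (forall p, p \notin s -> y p = 0) /\
   V (fun p => y p + e p) v /\ b = v - dot lam y].
have AB : forall a b, A a -> B b -> a <= b.
  move=> a b [y [v [Hy [Vy ->]]]] [y' [v' [Hy' [Vy' ->]]]].
  have [v3 [V3 Hv3]] := Va _ _ _ _ Vy Vy'.
  have E3 : (fun p => y p - e p + (y' p + e p)) = (fun p => y p + y' p).
    by apply/funext => p; ring.
  rewrite E3 in V3.
  have H1 : dot lam (fun p => y p + y' p) <= v3.
    by apply: Hlam V3 => p Hp; rewrite Hy ?Hy' ?addr0.
  rewrite dot_add in H1.
  rewrite lerBrDr addrAC lerBlDr; apply: (le_trans H1); by rewrite addrC.
have [a0 Ha0] : exists a0, A a0.
  have [v Hv] := Vd (fun p => 0 - e p).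
  by exists (dot lam (fun _ => 0) - v), (fun _ => 0), v.
have [b0 Hb0] : exists b0, B b0.
  have [v Hv] := Vd (fun p => 0 + e p).
  by exists (v - dot lam (fun _ => 0)), (fun _ => 0), v.
pose c := sup A.
have cB : forall b, B b -> c <= b.
  move=> b Bb; apply: ge_sup; first by exists a0.
  by move=> a Aa; exact: AB.
have Ac : forall a, A a -> a <= c.
  move=> a Aa; apply: ub_le_sup => //; exists b0 => a' Aa'; exact: AB.
exists (fun p => if p == q then c else lam p) => d v Hd Vdv.
pose y p := if p == q then 0 else d p.
have Hy : forall p, p \notin s -> y p = 0.
  move=> p Hp; rewrite /y; case: eqP => // /eqP Hpq; apply: Hd.
  by rewrite in_cons negb_or Hpq.
have Edot : dot (fun p => if p == q then c else lam p) d = dot lam y + c * d q.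
  rewrite /Defs.dot (bigD1 q) //= [X in _ = X + _](bigD1 q) //= /y !eqxx mulr0 add0r addrC.
  congr (_ + _); apply: eq_bigr => p /negbTE ->; done.
rewrite Edot.
have Ed : forall u : R, (fun p => u * d p) = (fun p => u * y p + (u * d q) * e p).
  move=> u; apply/funext => p; rewrite /y /e; case: eqP => [->|_] /=; ring.
have [Hneg|Hpos|Hz] := ltgtP (d q) 0.
- have Hi : 0 < - (d q)^-1 by rewrite oppr_gt0 invr_lt0.
  have := Vb _ _ _ Hi Vdv; rewrite Ed mulNr mulVf ?lt_eqF // => HV.
  have HA : A (dot lam (fun p => - (d q)^-1 * y p) - (- (d q)^-1 * v)).
    exists (fun p => - (d q)^-1 * y p), (- (d q)^-1 * v); split.
      by move=> p Hp; rewrite Hy ?mulr0.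
    split => //; move: HV; congr V; apply/funext => p; by rewrite mulN1r.
  have := Ac _ HA; rewrite dot_scale => Hc.
  have Hnq : 0 <= - d q by rewrite oppr_ge0 ltW.
  have := ler_wpM2l Hnq Hc.
  have -> : - d q * (- (d q)^-1 * dot lam y - - (d q)^-1 * v) = dot lam y - v.
    by field; rewrite lt_eqF.
  move=> H2; lra.
- have Hi : 0 < (d q)^-1 by rewrite invr_gt0.
  have := Vb _ _ _ Hi Vdv; rewrite Ed mulVf ?gt_eqF // => HV.
  have HB : B ((d q)^-1 * v - dot lam (fun p => (d q)^-1 * y p)).
    exists (fun p => (d q)^-1 * y p), ((d q)^-1 * v); split.
      by move=> p Hp; rewrite Hy ?mulr0.
    split => //; move: HV; congr V; apply/funext => p; by rewrite mul1r.
  have := cB _ HB; rewrite dot_scale => Hc.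
  have := ler_wpM2l (ltW Hpos) Hc.
  have -> : d q * ((d q)^-1 * v - (d q)^-1 * dot lam y) = v - dot lam y.
    by field; rewrite gt_eqF.
  move=> H2; lra.
- have Edy : d = y.
    apply/funext => p; rewrite /y; case: eqP => [->|//]; exact: Hz.
  rewrite Hz mulr0 addr0; apply: Hlam => //; by rewrite -Edy.
Qed.
End Gen.

Section Main.
Variables (R : realType) (n m k : nat) (P : 'I_n * 'I_m -> 'I_n -> R)
  (nu0 : 'I_n -> R) (gamma : R) (Psi : 'I_k -> Defs.vec R n m) (b : 'I_k -> R)
  (X : set (Defs.vec R n m)) (f : Defs.vec R n m -> R).
Hypotheses (HP : transition_law P) (Hnu0 : simplexS nu0) (Hgamma1 : gamma < 1)
  (HXv : convex_set X) (HXD : @simplexSA R n m `<=` X) (Hfv : convex_on X f).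
Local Notation vec := (Defs.vec R n m).
Local Notation dot := (@Defs.dot R n m).
Local Notation F := (feasF P gamma nu0 Psi b).

Lemma sum_ind (s0 : 'I_n) : \sum_(s' : 'I_n) (s0 == s')%:R = 1 :> R.
Proof.
rewrite (bigD1 s0) //= eqxx big1 ?addr0 // => s' Hs'.
by rewrite eq_sym (negbTE Hs').
Qed.

Lemma F_sum mu : F mu -> \sum_p mu p = 1.
Proof.
move=> [[H0 Hflow] _].
have : \sum_(s' : 'I_n) \sum_p EmgP P gamma p s' * mu p = (1 - gamma) * \sum_s' nu0 s'.
  by rewrite mulr_sumr; apply: eq_bigr => s' _; exact: Hflow.
rewrite exchange_big /=.
have E : forall p, \sum_(s' : 'I_n) EmgP P gamma p s' * mu p = (1 - gamma) * mu p.
  move=> p; rewrite -mulr_suml /EmgP sumrB -mulr_sumr (HP p).2 sum_ind mulr1.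
  done.
rewrite (eq_bigr _ (fun p _ => E p)) -mulr_sumr Hnu0.2 mulr1.
move=> H; apply: (@mulfI _ (1 - gamma)); first by rewrite subr_eq0 gt_eqF.
by rewrite H mulr1.
Qed.

Lemma F_X mu : F mu -> X mu.
Proof. move=> Fmu; apply: HXD; split; [exact: Fmu.1.1 | exact: F_sum]. Qed.

Lemma F_convex x y t : F x -> F y -> 0 <= t -> t <= 1 ->
  F (fun p => t * x p + (1 - t) * y p).
Proof.
move=> [[x0 xf] xb] [[y0 yf] yb] t0 t1; split; [split|].
- move=> p; apply: addr_ge0; apply: mulr_ge0 => //; by rewrite subr_ge0.
- move=> s'.
  have -> : (1 - gamma) * nu0 s' = t * ((1 - gamma) * nu0 s') + (1 - t) * ((1 - gamma) * nu0 s') by ring.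
  rewrite -{1}(xf s') -(yf s') !mulr_sumr -big_split /=; apply: eq_bigr => p _; ring.
- move=> i; rewrite dot_comb.
  have h1 := ler_wpM2l t0 (xb i).
  have h2 := ler_wpM2l (ltac:(by rewrite subr_ge0) : 0 <= 1 - t) (yb i).
  lra.
Qed.

Variables (muE r : vec).
Hypotheses (HE : F muE)
  (Hopt : forall mu', F mu' -> dot r mu' - f mu' <= dot r muE - f muE).

Definition phi (x : vec) := f x - dot r x.

Lemma phi_convex x y t : X x -> X y -> 0 <= t -> t <= 1 ->
  phi (fun p => t * x p + (1 - t) * y p) <= t * phi x + (1 - t) * phi y.
Proof.
move=> Xx Xy t0 t1; rewrite /phi dot_comb.
have := Hfv Xx Xy t0 t1; lra.
Qed.

Lemma phi_opt mu' : F mu' -> phi muE <= phi mu'.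
Proof. move=> /Hopt; rewrite /phi; lra. Qed.

Definition Kc (kk : vec) := exists s, 0 < s /\ F (fun p => muE p + s * kk p).

Lemma phi_K kk t : Kc kk -> 0 < t -> X (fun p => muE p + t * kk p) ->
  phi muE <= phi (fun p => muE p + t * kk p).
Proof.
move=> [s [s0 Fs]] t0 Xt.
have s0' : s != 0 by rewrite gt_eqF.
have t0' : t != 0 by rewrite gt_eqF.
case: (leP t s) => hts.
  have : F (fun p => (t / s) * (muE p + s * kk p) + (1 - t / s) * muE p).
    apply: F_convex => //; first by rewrite divr_ge0 // ltW.
    by rewrite ler_pdivrMr // mul1r.
  have -> : (fun p => (t / s) * (muE p + s * kk p) + (1 - t / s) * muE p) =
     (fun p => muE p + t * kk p) by apply/funext => p; field.
  exact: phi_opt.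
have w0 : 0 < s / t by rewrite divr_gt0.
have w1 : s / t <= 1 by rewrite ler_pdivrMr // mul1r ltW.
have := phi_convex Xt (F_X HE) (ltW w0) w1.
have -> : (fun p => s / t * (muE p + t * kk p) + (1 - s / t) * muE p) =
     (fun p => muE p + s * kk p) by apply/funext => p; field.
move: (phi_opt Fs); set a := phi (fun p => muE p + t * kk p); set e := phi muE; set c := phi (fun p => muE p + s * kk p).
move=> h1 h2.
have : 0 <= s / t * (a - e).
  have -> : s / t * (a - e) = (s / t * a + (1 - s / t) * e) - e by ring.
  rewrite subr_ge0; exact: le_trans h1 h2.
by rewrite pmulr_rge0 // subr_ge0.
Qed.

Lemma Kc0 : Kc (fun _ => 0).
Proof.
exists 1; split => //; have -> : (fun p => muE p + 1 * 0) = muE.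
  by apply/funext => p; rewrite mulr0 addr0.
exact: HE.
Qed.

Lemma KcD a c : Kc a -> Kc c -> Kc (fun p => a p + c p).
Proof.
move=> [s1 [s10 F1]] [s2 [s20 F2]].
have s12 : 0 < s1 + s2 by rewrite addr_gt0.
exists (s1 * s2 / (s1 + s2)); split; first by rewrite !divr_gt0 // mulr_gt0.
have := F_convex (t := s2 / (s1 + s2)) F1 F2.
have -> : (fun p => s2 / (s1 + s2) * (muE p + s1 * a p) + (1 - s2 / (s1 + s2)) * (muE p + s2 * c p))
  = (fun p => muE p + s1 * s2 / (s1 + s2) * (a p + c p)).
  by apply/funext => p; field; rewrite gt_eqF.
apply; first by rewrite divr_ge0 // ltW.
by rewrite ler_pdivrMr // mul1r lerDr ltW.
Qed.

Lemma KcZ u a : 0 < u -> Kc a -> Kc (fun p => u * a p).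
Proof.
move=> u0 [s [s0 Fs]]; exists (s / u); split; first by rewrite divr_gt0.
have -> : (fun p => muE p + s / u * (u * a p)) = (fun p => muE p + s * a p).
  by apply/funext => p; field; rewrite gt_eqF.
exact: Fs.
Qed.

Lemma KcF y : F y -> Kc (fun p => y p - muE p).
Proof.
move=> Fy; exists 1; split => //; have -> : (fun p => muE p + 1 * (y p - muE p)) = y.
  by apply/funext => p; ring.
exact: Fy.
Qed.

Definition V (d : vec) (v : R) : Prop := exists t kk x, 0 < t /\ Kc kk /\ X x /\
  (forall p, x p = muE p + t * (d p + kk p)) /\ v = (phi x - phi muE) / t.

Lemma Vext d d' v : V d v -> (forall p, d p = d' p) -> V d' v.
Proof.
move=> [t [kk [x [t0 [Kk [Xx [Ex ->]]]]]]] Ed.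
by exists t, kk, x; do 4 (split => //); move=> p; rewrite Ex Ed.
Qed.

Lemma Va d1 d2 v1 v2 : V d1 v1 -> V d2 v2 ->
    exists v3, V (fun p => d1 p + d2 p) v3 /\ v3 <= v1 + v2.
Proof.
move=> [t1 [k1 [x1 [t10 [K1 [X1 [E1 ->]]]]]]] [t2 [k2 [x2 [t20 [K2 [X2 [E2 ->]]]]]]].
have t12 : 0 < t1 + t2 by rewrite addr_gt0.
have t10' : t1 != 0 by rewrite gt_eqF.
have t20' : t2 != 0 by rewrite gt_eqF.
have t12' : t1 + t2 != 0 by rewrite gt_eqF.
set w := t2 / (t1 + t2).
have w0 : 0 <= w by rewrite divr_ge0 // ltW.
have w1 : w <= 1 by rewrite ler_pdivrMr // mul1r lerDr ltW.
set x3 := (fun p => w * x1 p + (1 - w) * x2 p).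
set tau := t1 * t2 / (t1 + t2).
have tau0 : 0 < tau by rewrite divr_gt0 // mulr_gt0.
exists ((phi x3 - phi muE) / tau); split.
  exists tau, (fun p => k1 p + k2 p), x3; split => //; split; first exact: KcD.
  split; first exact: HXv.
  split => // p; rewrite /x3 E1 E2 /w /tau; field; rewrite ?t12' ?t20' ?t10' //.
have hc : phi x3 <= w * phi x1 + (1 - w) * phi x2 by exact: phi_convex.
have -> : (phi x1 - phi muE) / t1 + (phi x2 - phi muE) / t2 =
   (w * phi x1 + (1 - w) * phi x2 - phi muE) / tau.
  by rewrite /w /tau; field; rewrite t12' t20' t10'.
by rewrite ler_pM2r ?invr_gt0 // lerD2r.
Qed.

Lemma Vb a d v : 0 < a -> V d v -> V (fun p => a * d p) (a * v).
Proof.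
move=> a0 [t [kk [x [t0 [Kk [Xx [Ex ->]]]]]]].
have a0' : a != 0 by rewrite gt_eqF.
have t0' : t != 0 by rewrite gt_eqF.
exists (t / a), (fun p => a * kk p), x; split; first by rewrite divr_gt0.
split; first exact: KcZ.
split => //; split.
  by move=> p; rewrite Ex; field; rewrite ?a0' ?t0' //.
by field; rewrite ?a0' ?t0' //.
Qed.

Lemma Vc v : V (fun _ => 0) v -> 0 <= v.
Proof.
move=> [t [kk [x [t0 [Kk [Xx [Ex ->]]]]]]].
have Ex' : x = (fun p => muE p + t * kk p) by apply/funext => p; rewrite Ex add0r.
rewrite Ex' in Xx *.
by rewrite divr_ge0 ?subr_ge0 ?(ltW t0) //; apply: phi_K.
Qed.


Local Notation uvec := (@unit_vec R n m).

Lemma sum_enum (G : 'I_n * 'I_m -> R) :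
  \sum_(p : 'I_n * 'I_m) G p = \sum_(j < #|{: 'I_n * 'I_m}|) G (enum_val j).
Proof. rewrite -(big_enum_val G); apply: eq_bigl => p; by rewrite inE. Qed.

Lemma unit_simplex q : @simplexSA R n m (uvec q).
Proof.
split; first by move=> p; rewrite /unit_vec ler0n.
rewrite /unit_vec (bigD1 q) //= eqxx big1 ?addr0 // => p /negbTE -> //.
Qed.

Lemma sum_unit (y : vec) p : \sum_q y q * uvec q p = y p.
Proof.
rewrite (bigD1 p) //= /uvec eqxx mulr1 big1 ?addr0 // => q Hq.
by rewrite eq_sym (negbTE Hq) mulr0.
Qed.

Lemma H_aff y : \sum_p y p = 1 -> aff_hull X y.
Proof.
move=> Hy; exists #|{: 'I_n * 'I_m}|, (fun j => uvec (enum_val j)),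
  (fun j => y (enum_val j)); split; first by move=> j; apply: HXD; exact: unit_simplex.
split; first by rewrite -sum_enum.
apply/funext => p; by rewrite -(sum_enum (fun q => y q * uvec q p)) sum_unit.
Qed.

Lemma all_aff x1 : X x1 -> \sum_p x1 p != 1 -> forall y, aff_hull X y.
Proof.
move=> Xx1 Hx1 y.
set N := #|{: 'I_n * 'I_m}|.
set be := (1 - \sum_p y p) / (1 - \sum_p x1 p).
have Hd : 1 - \sum_p x1 p != 0 by rewrite subr_eq0 eq_sym.
exists N.+1, (fun j : 'I_N.+1 => match unlift ord0 j with
      Some j' => uvec (enum_val j') | None => x1 end),
  (fun j : 'I_N.+1 => match unlift ord0 j with
      Some j' => y (enum_val j') - be * x1 (enum_val j') | None => be end).
split.
  move=> j; case: (unlift ord0 j) => [j'|] //; apply: HXD; exact: unit_simplex.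
split.
  rewrite big_ord_recl unlift_none.
  rewrite (eq_bigr (fun j => y (enum_val j) - be * x1 (enum_val j))); last first.
    by move=> j _; rewrite liftK.
  rewrite sumrB -mulr_sumr -!sum_enum /be; field; done.
apply/funext => p; rewrite big_ord_recl unlift_none.
rewrite (eq_bigr (fun j => (y (enum_val j) - be * x1 (enum_val j)) * uvec (enum_val j) p)); last first.
  by move=> j _; rewrite liftK.
rewrite -(sum_enum (fun q => (y q - be * x1 q) * uvec q p)).
rewrite (eq_bigr (fun q => y q * uvec q p - be * (x1 q * uvec q p))); last first.
  by move=> q _; ring.
by rewrite sumrB -mulr_sumr !sum_unit; ring.
Qed.


Lemma exists_pi mu0 : F mu0 -> exists pi : vec -> vec,
  (forall a c u v p, pi (fun q => u * a q + v * c q) p = u * pi a p + v * pi c p) /\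
  (forall x, X x -> forall p, pi (fun q => x q - muE q) p = x p - muE p) /\
  (forall d, aff_hull X (fun p => mu0 p + pi d p)).
Proof.
move=> F0.
case: (pselect (forall x, X x -> \sum_p x p = 1)) => HA.
  pose N : R := #|{: 'I_n * 'I_m}|%:R.
  have N0 : N != 0.
    rewrite pnatr_eq0 -lt0n; apply/card_gt0P.
    case: (pickP (@predT ('I_n * 'I_m))) => [p _|H0]; first by exists p.
    have H1 := F_sum F0.
    have : \sum_p mu0 p = 0 by rewrite big1 // => p _; move: (H0 p).
    by rewrite H1 => /eqP; rewrite oner_eq0.
  exists (fun d p => d p - (\sum_q d q) / N); split.
    move=> a c u v p; rewrite big_split /= -!mulr_sumr; field; done.
  split.
    move=> x Xx p; rewrite sumrB (HA _ Xx) (F_sum HE) subrr mul0r subr0 //.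
  move=> d; apply: H_aff.
  rewrite big_split /= (F_sum F0) sumrB sumr_const -mulr_natl -/N.
  field; done.
have [x1 Hx1] : exists x1, ~ (X x1 -> \sum_p x1 p = 1) by apply/existsNP.
move/not_implyP: Hx1 => [Xx1 Hs1].
exists (fun d => d); split => //; split => // d.
apply: (all_aff Xx1); by apply/eqP.
Qed.

Lemma KKT_lam : (exists mu0, F mu0 /\ relint X mu0) -> exists lam : vec,
  (forall x, X x -> dot lam (fun p => x p - muE p) <= phi x - phi muE) /\
  (forall kk, Kc kk -> 0 <= dot lam kk).
Proof.
move=> [mu0 [F0 [X0 [e e0 He]]]].
have [pi [Hlin [Hfix Haff]]] := exists_pi F0.
have pi0 : forall p, pi (fun _ => 0) p = 0.
  move=> p; have H := Hlin (fun _ => 0) (fun _ => 0) 0 0 p.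
  by rewrite !mul0r addr0 in H.
have piD : forall a c p, pi (fun q => a q + c q) p = pi a p + pi c p.
  move=> a c p; have H := Hlin a c 1 1 p.
  have E : (fun q => 1 * a q + 1 * c q) = (fun q => a q + c q) by apply/funext => q; rewrite !mul1r.
  by rewrite E !mul1r in H.
have piZ : forall u a p, pi (fun q => u * a q) p = u * pi a p.
  move=> u a p; have H := Hlin a a u 0 p.
  have E : (fun q => u * a q + 0 * a q) = (fun q => u * a q) by apply/funext => q; rewrite mul0r addr0.
  by rewrite E mul0r addr0 in H.
have HVa : forall d1 d2 v1 v2, V (pi d1) v1 -> V (pi d2) v2 -> exists v3, V (pi (fun p => d1 p + d2 p)) v3 /\ v3 <= v1 + v2.
  move=> d1 d2 v1 v2 V1 V2; have [v3 [V3 H3]] := Va V1 V2.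
  by exists v3; split => //; apply: (Vext V3) => p; rewrite piD.
have HVb : forall a d v, 0 < a -> V (pi d) v -> V (pi (fun p => a * d p)) (a * v).
  move=> a d v a0 Vdv; apply: (Vext (Vb a0 Vdv)) => p; by rewrite piZ.
have HVc : forall v, V (pi (fun _ => 0)) v -> 0 <= v.
  move=> v Vv; apply: Vc; apply: (Vext Vv) => p; by rewrite pi0.
have HVd : forall d, exists v, V (pi d) v.
  move=> d; set D := pi d.
  set S := \sum_p `|D p|.
  have S0 : 0 <= S by apply: sumr_ge0 => p _.
  set c := S / e + 1.
  have c0 : 0 < c by rewrite /c ltr_wpDl // divr_ge0 // ltW.
  set x := fun p => mu0 p + c^-1 * D p.
  have Xx : X x.
    apply: He.
      have := Haff (fun q => c^-1 * d q).
      by have -> : (fun p => mu0 p + pi (fun q => c^-1 * d q) p) = x by apply/funext => p; rewrite piZ.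
    move=> p; rewrite /x addrC addKr normrM gtr0_norm ?invr_gt0 //.
    apply: (@le_lt_trans _ _ (c^-1 * S)).
      rewrite ler_pM2l ?invr_gt0 //; rewrite /S (bigD1 p) //= lerDl.
      by apply: sumr_ge0 => q _.
    rewrite ltr_pdivrMl // /c mulrDl mul1r divfK ?gt_eqF // ltrDl //.
  exists ((phi x - phi muE) / c^-1), c^-1, (fun p => c * (mu0 p - muE p)), x.
  split; first by rewrite invr_gt0.
  split; first by apply: KcZ => //; exact: KcF.
  split => //; split => // p; rewrite /x; field; by rewrite gt_eqF.
have [lam Hlam] := @HB R n m (fun d v => V (pi d) v) HVa HVb HVc HVd.
exists lam; split.
    move=> x Xx; rewrite -[X in _ <= X]divr1; apply: Hlam; apply: (@Vext (fun p => x p - muE p)); last by move=> p; rewrite Hfix.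
    exists 1, (fun _ => 0), x; split => //; split; first exact: Kc0.
    by split => //; split => // p; rewrite addr0 mul1r addrC subrK.
  move=> kk Kk.
  have pik : forall p, pi kk p = kk p.
    move: Kk => [s [s0 Fs]] p.
    have := Hfix _ (F_X Fs) p.
    have -> : (fun q => muE q + s * kk q - muE q) = (fun q => s * kk q).
      by apply/funext => q; ring.
    rewrite piZ addrC addKr; apply: mulfI; by rewrite gt_eqF.
  have := Hlam (fun p => -1 * kk p) 0.
  rewrite dot_scale mulN1r oppr_le0; apply.
  apply: (@Vext (fun p => -1 * kk p)); last by move=> p; rewrite piZ pik.
  exists 1, kk, muE; split => //; split => //; split; first exact: F_X.
  by split; [move=> p; ring | rewrite subrr mul0r].
Qed.

Lemma poly_K d : (forall s', \sum_p EmgP P gamma p s' * d p = 0) ->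
  (forall i, dot (Psi i) muE = b i -> dot (Psi i) d <= 0) ->
  (forall q, muE q = 0 -> 0 <= d q) -> Kc d.
Proof.
move=> Hfl Hps Hq.
have [[H0 Hflow] Hb] := HE.
pose Q : ('I_k + ('I_n * 'I_m))%type -> R -> Prop := (fun i s => match i with
     | inl j => dot (Psi j) muE + s * dot (Psi j) d <= b j
     | inr q => 0 <= muE q + s * d q end).
have HQ : forall i, exists2 s0, 0 < s0 & forall s, 0 < s -> s <= s0 -> Q i s.
  case => [j|q].
    case: (pselect (dot (Psi j) muE = b j)) => Hact.
      exists 1 => // s1 s10 _; rewrite /Q Hact -[X in _ <= X]addr0 lerD2l.
      by apply: mulr_ge0_le0; [exact: ltW | exact: Hps].
    have Hlt : 0 < b j - dot (Psi j) muE.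
      by rewrite subr_gt0 lt_neqAle Hb andbT; apply/eqP.
    have [s1 s10 H1] := small_lin (dot (Psi j) d) Hlt.
    exists s1 => // s2 s20 hs2; have := H1 _ s20 hs2; rewrite /Q; lra.
  case: (pselect (muE q = 0)) => Hz.
    exists 1 => // s1 s10 _; rewrite /Q Hz add0r; apply: mulr_ge0; [exact: ltW | exact: Hq].
  have Hlt : 0 < muE q by rewrite lt_neqAle eq_sym H0 andbT; apply/eqP.
  have [s1 s10 H1] := small_lin (- d q) Hlt.
  exists s1 => // s2 s20 hs2; have := H1 _ s20 hs2; rewrite /Q mulrN; lra.
have [s s0 Hs] := fin_small HQ.
exists s; split => //; split; [split|].
- by move=> p; have := Hs (inr p).
- move=> s'; rewrite -(Hflow s').
  transitivity (\sum_p EmgP P gamma p s' * muE p + s * \sum_p EmgP P gamma p s' * d p).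
    by rewrite mulr_sumr -big_split /=; apply: eq_bigr => p _; ring.
  by rewrite Hfl mulr0 addr0.
- by move=> i; rewrite dot_addZ; have := Hs (inl i).
Qed.

Lemma KKT : (exists mu0, F mu0 /\ relint X mu0) ->
  msum4 (subdiff X f muE) (Uspan P gamma) (Ccone Psi b muE) (Econe muE) r.
Proof.
move=> Hsl; have [lam [Hsub HK]] := KKT_lam Hsl.
pose I := (('I_n + 'I_n) + ('I_k + ('I_n * 'I_m)))%type.
pose gen : I -> vec := fun i => match i with
  | inl (inl s') => fun p => EmgP P gamma p s'
  | inl (inr s') => fun p => - EmgP P gamma p s'
  | inr (inl j) => if dot (Psi j) muE == b j then (fun p => - Psi j p) else (fun _ => 0)
  | inr (inr q) => if muE q == 0 then uvec q else (fun _ => 0)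
  end.
have Hfar : forall x : vec, (forall i, i \in enum (@predT I) -> 0 <= dot (gen i) x) ->
    0 <= dot lam x.
  move=> x Hx.
  have Hx' : forall i, 0 <= dot (gen i) x by move=> i; apply: Hx; rewrite mem_enum.
  apply: HK; apply: poly_K.
  - move=> s'; apply/eqP; rewrite eq_le; apply/andP; split.
      by have := Hx' (inl (inr s')); rewrite /= dotNl oppr_ge0.
    by have := Hx' (inl (inl s')).
  - by move=> i Hact; have := Hx' (inr (inl i)); rewrite /= Hact eqxx dotNl oppr_ge0.
  - by move=> q Hq; have := Hx' (inr (inr q)); rewrite /= Hq eqxx dot_unit.
have [lamF [HlF Hlam]] := farkas (enum_uniq (@predT I)) Hfar.
have Hl : forall p, lam p = \sum_i lamF i * gen i p.
  move=> p; rewrite Hlam big_enum /=; apply: eq_bigl => i; by rewrite inE.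
pose vU := fun s' => lamF (inl (inr s')) - lamF (inl (inl s')).
pose lc := fun j => if dot (Psi j) muE == b j then lamF (inr (inl j)) else 0.
pose le := fun q => if muE q == 0 then lamF (inr (inr q)) else 0.
exists (fun p => r p + lam p), (fun p => \sum_s' EmgP P gamma p s' * vU s'),
  (fun p => \sum_j lc j * Psi j p), (fun p => \sum_q le q * - uvec q p).
split.
  move=> mt Xmt; have := Hsub mt Xmt; rewrite /vsub dot_addl /phi !dot_subr; lra.
split; first by exists vU.
split.
  exists lc; split; first by move=> j; rewrite /lc; case: ifP.
  split => //; move=> j Hj; rewrite /lc; case: eqP => //.
split.
  exists le; split; first by move=> q; rewrite /le; case: ifP.
  split => //; move=> q Hq; rewrite /le; case: eqP => //.
apply/funext => p.
have e1 : \sum_s' EmgP P gamma p s' * vU s' =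
   - (\sum_s' lamF (inl (inl s')) * gen (inl (inl s')) p +
      \sum_s' lamF (inl (inr s')) * gen (inl (inr s')) p).
  by rewrite -big_split -sumrN /=; apply: eq_bigr => s' _; rewrite /vU; ring.
have e3 : \sum_j lc j * Psi j p = - \sum_j lamF (inr (inl j)) * gen (inr (inl j)) p.
  rewrite -sumrN; apply: eq_bigr => j _; rewrite /lc /gen; case: ifP => _ /=; ring.
have e4 : \sum_q le q * - uvec q p = - \sum_q lamF (inr (inr q)) * gen (inr (inr q)) p.
  rewrite -sumrN; apply: eq_bigr => q _; rewrite /le /gen; case: ifP => _ /=; ring.
rewrite e1 e3 e4 Hl big_sumType !big_sumType /=; ring.
Qed.

End Main.

Section Final.
Variables (R : realType) (n m k : nat) (P : 'I_n * 'I_m -> 'I_n -> R)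
  (nu0 : 'I_n -> R) (gamma : R) (Psi : 'I_k -> Defs.vec R n m) (b : 'I_k -> R)
  (X : set (Defs.vec R n m)) (f : Defs.vec R n m -> R).
Hypotheses (HP : transition_law P) (Hnu0 : simplexS nu0) (Hgamma1 : gamma < 1)
  (HXD : @simplexSA R n m `<=` X).
Local Notation vec := (Defs.vec R n m).
Local Notation dot := (@Defs.dot R n m).
Local Notation F := (feasF P gamma nu0 Psi b).
Variable (muE : vec).
Hypothesis (HE : F muE).

Lemma easy r : msum4 (subdiff X f muE) (Uspan P gamma) (Ccone Psi b muE) (Econe muE) r ->
  forall mu', F mu' -> dot r mu' - f mu' <= dot r muE - f muE.
Proof.
move=> [g [u [c [e [Hg [[v Eu] [[lc [lc0 [lcQ Ec]]] [[le [le0 [leQ Ee]]] Er]]]]]]]] mu' Fmu'.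
have Hgm := Hg mu' (F_X HP Hnu0 Hgamma1 HXD Fmu').
set d := vsub mu' muE.
have Ed : forall (w : vec), dot w mu' - dot w muE = dot w d by move=> w; rewrite /d /vsub dot_subr.
have Er' : dot r d = dot g d + dot u d + dot c d + dot e d.
  by rewrite Er !dot_addl.
have Hu : dot u d = 0.
  rewrite Eu dot_suml big1 // => s' _.
  have [[_ Hf1] _] := Fmu'; have [[_ Hf2] _] := HE.
  transitivity (v s' * (\sum_p EmgP P gamma p s' * mu' p - \sum_p EmgP P gamma p s' * muE p)).
    rewrite -sumrB mulr_sumr /Defs.dot; apply: eq_bigr => p _; rewrite /d /vsub; ring.
  by rewrite Hf1 Hf2 subrr mulr0.
have Hc : dot c d <= 0.
  rewrite Ec dot_suml; apply: sumr_le0 => j _.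
  have -> : dot (fun p => lc j * Psi j p) d = lc j * dot (Psi j) d by rewrite /Defs.dot mulr_sumr; apply: eq_bigr => p _; ring.
  case: (pselect (dot (Psi j) muE = b j)) => Hj.
    apply: mulr_ge0_le0 => //; rewrite -Ed Hj subr_le0; exact: Fmu'.2.
  by rewrite lcQ // mul0r.
have He : dot e d <= 0.
  rewrite Ee dot_suml; apply: sumr_le0 => q _.
  have -> : dot (fun p => le q * - unit_vec R q p) d = - (le q * mu' q) + le q * muE q.
    rewrite /Defs.dot (bigD1 q) //= /unit_vec eqxx big1 ?addr0 => [|p /negbTE ->]; rewrite /d /vsub.
      by rewrite /= mulr1n; ring.
    by rewrite /= mulr0n oppr0 mulr0 mul0r.
  case: (pselect (muE q = 0)) => Hq.
    rewrite Hq mulr0 addr0 oppr_le0; apply: mulr_ge0 => //; exact: Fmu'.1.1.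
  by rewrite leQ // !mul0r oppr0 addr0.
move: Hgm; rewrite -/d => Hgm.
have := Ed r; lra.
Qed.

End Final.

Theorem corollary4p6 (R : realType) (n m k : nat) (Hm : (1 < m)%N)
  (P : 'I_n * 'I_m -> 'I_n -> R) (nu0 : 'I_n -> R) (gamma : R)
  (Psi : 'I_k -> vec R n m) (b : 'I_k -> R)
  (X : set (vec R n m)) (f : vec R n m -> R)
  (HP : transition_law P) (Hnu0 : simplexS nu0)
  (Hgamma0 : 0 < gamma) (Hgamma1 : gamma < 1)
  (HXc : closed_set X) (HXv : convex_set X) (HXD : @simplexSA R n m `<=` X)
  (Hfc : continuous_on X f) (Hfv : convex_on X f)
  (muE : vec R n m)
  (Hslater : exists mu, feasF P gamma nu0 Psi b mu /\ relint X mu)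
  (Hreal : exists rE : vec R n m, RL (feasF P gamma nu0 Psi b) f rE muE) :
  IRL (feasF P gamma nu0 Psi b) f muE =
  msum4 (subdiff X f muE) (Uspan P gamma) (Ccone Psi b muE) (Econe muE).
Proof.
have [rE [HEF HoptE]] := Hreal.
have KKTg := fun r Hopt => KKT HP Hnu0 Hgamma1 HXv HXD Hfv HEF (r := r) Hopt Hslater.
have [g0 [_ [_ [_ [Hg0 _]]]]] := KKTg rE HoptE.
have FX : forall mu, feasF P gamma nu0 Psi b mu -> X mu by move=> mu; exact: F_X.
have Hub : forall r', has_ubound [set dot r' (vsub mu muE) - f mu | mu in feasF P gamma nu0 Psi b].
  move=> r'; pose w := fun p => r' p - g0 p.
  exists (\sum_p `|w p| - dot w muE - f muE) => _ [mu Fmu <-].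
  have Hg := Hg0 mu (FX mu Fmu).
  have Hw : dot w mu <= \sum_p `|w p|.
    rewrite /Defs.dot; apply: ler_sum => p _.
    have Hm0 : 0 <= mu p by exact: Fmu.1.1.
    have Hm1 : mu p <= 1.
      rewrite -(F_sum HP Hnu0 Hgamma1 Fmu) (bigD1 p) //= lerDl.
      by apply: sumr_ge0 => q _; exact: Fmu.1.1.
    apply: (le_trans (ler_wpM2r Hm0 (ler_norm (w p)))).
    by rewrite -[X in _ <= X]mulr1 ler_wpM2l.
  have : dot w (vsub mu muE) = dot r' (vsub mu muE) - dot g0 (vsub mu muE).
    by rewrite /Defs.dot -sumrB; apply: eq_bigr => p _; rewrite /w; ring.
  rewrite /vsub dot_subr => Ew.
  move: Hg; rewrite /vsub => Hg; lra.
have Hval : forall r, (forall mu', feasF P gamma nu0 Psi b mu' -> dot r mu' - f mu' <= dot r muE - f muE) ->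
    irl_obj (feasF P gamma nu0 Psi b) f muE r = - f muE.
  move=> r Hr; apply/eqP; rewrite eq_le; apply/andP; split.
    apply: ge_sup; first by exists (dot r (vsub muE muE) - f muE), muE.
    move=> _ [mu Fmu <-]; rewrite /vsub dot_subr; have := Hr mu Fmu; lra.
  apply: (ub_le_sup (Hub r)); exists muE => //; by rewrite /vsub dot_subr subrr sub0r.
apply/seteqP; split.
  move=> r Hr; have H1 := Hr rE; rewrite (Hval rE HoptE) in H1.
  apply: KKTg => mu' Fmu'.
  have : dot r (vsub mu' muE) - f mu' <= irl_obj (feasF P gamma nu0 Psi b) f muE r.
    by apply: (ub_le_sup (Hub r)); exists mu'.
  rewrite /vsub dot_subr; lra.
move=> r Hr r'; rewrite (Hval r (easy HP Hnu0 Hgamma1 HXD HEF Hr)).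
apply: (ub_le_sup (Hub r')); exists muE => //; by rewrite /vsub dot_subr subrr sub0r.
Qed.
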